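(* Every positive tight program $P$ can be isomorphically represented by a cascade program product of reset programs; that is, there exist $k\ge1$, a finite nonempty set $\mathcal I_{\mathbf P}$ and a feedforward function $\psi_{\mathbf P}$ such that the product $\mathbf P=R\ltimes\dots\ltimes R\,[\mathcal I_{\mathbf P},\psi_{\mathbf P}]$ ($k$ factors, each the reset program $R$) satisfies $\Psi_P\in\mathbf I\mathbf S(\{\Psi_{\mathbf P}\})$.
   Context: Programs: a (normal logic) program $P$ over a finite nonempty set of atoms $\Gamma_P$ is a finite nonempty set of rules $a\leftarrow b_1,\dots,b_k,\mathrm{not}\,b_{k+1},\dots,\mathrm{not}\,b_m$ ($m\ge k\ge 0$, atoms in $\Gamma_P$); for such a rule $r$, $H(r)=a$, $B^+(r)=\{b_1,\dots,b_k\}$, $B^-(r)=\{b_{k+1},\dots,b_m\}$. $P$ is positive if $B^-(r)=\emptyset$ for every $r\in P$. $P$ is tight if there is a map $\ell:\Gamma_P\to\mathbb Z_{\ge0}$ with $\ell(H(r))>\ell(b)$ for every rule $r\in P$ and every $b\in B^+(r)$. $\mathcal I_P$ is the power set of $\Gamma_P$. $\Psi_P:\mathcal I_P\times\mathcal I_P\to\mathcal I_P$ is $\Psi_P(I,J)=\{H(r): r\in P,\ B^+(r)\subseteq I,\ B^-(r)\cap J=\emptyset\}$. The characteristic automaton of $P$ is $\langle \mathcal I_P,\mathcal I_P,\Psi_P\rangle$, also denoted $\Psi_P$. Reset program: $R$ over $\{1\}$ consists of the single rule $1\leftarrow\mathrm{not}\,1$ (so $\Psi_R(I,J)=\{1\}$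 if $J=\emptyset$ and $\emptyset$ otherwise). Automata: an automaton $\langle Q,\Sigma,\delta\rangle$ has finite state set $Q$, finite nonempty input alphabet $\Sigma$, and $\delta:Q\times\Sigma\to Q$. $\langle Q',\Sigma',\delta'\rangle$ is a subautomaton of $\langle Q,\Sigma,\delta\rangle$ if $Q'\subseteq Q$, $\Sigma'\subseteq\Sigma$, $\delta(Q'\times\Sigma')\subseteq Q'$ and $\delta'=\delta|_{Q'\times\Sigma'}$. An isomorphism onto $\langle Q',\Sigma',\delta'\rangle$ is a pair of bijections $h_1:Q\to Q'$, $h_2:\Sigma\to\Sigma'$ with $h_1(\delta(q,x))=\delta'(h_1(q),h_2(x))$ for all $q,x$. $\mathbf S(\mathcal A)$, $\mathbf I(\mathcal A)$ denote the classes of subautomata and isomorphic images of automata in $\mathcal A$. Cascade program product: let $P_1,\dots,P_k$ ($k\ge1$) be programs and $\mathcal I_{\mathbf P}$ a finite nonempty set. A feedforward function is $\psi_{\mathbf P}=(\psi_{\mathbf P,1},\dots,\psi_{\mathbf P,k})$ with $\psi_{\mathbf P,i}:(\mathcal I_{P_1}\times\dots\times\mathcal I_{P_k})\times\mathcal I_{\mathbf P}\to\mathcal I_{P_i}$ not depending on its $j$-th component for any $j\ge i$. The product $\mathbf P=P_1\ltimes\dots\ltimes P_k[\mathcal I_{\mathbf P},\psi_{\mathbf P}]$ has characteristic automaton $\Psi_{\mathbf P}=\langle \mathcal I_{P_1}\times\dots\times\mathcal I_{P_k},\ \mathcal I_{\mathbf P},\ \Psi_{\mathbf P}\rangle$ with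 $\Psi_{\mathbf P}((I_1,\dots,I_k),\mathbf J)=\big(\Psi_{P_1}(I_1,\psi_{\mathbf P,1}(\mathbf J)),\dots,\Psi_{P_k}(I_k,\psi_{\mathbf P,k}((I_1,\dots,I_{k-1}),\mathbf J))\big)$. The product isomorphically represents $P$ if $\Psi_P\in\mathbf I\mathbf S(\{\Psi_{\mathbf P}\})$. *)

(* Defs.v *)
From mathcomp Require Import all_boot.
Set Implicit Arguments. Unset Strict Implicit. Unset Printing Implicit Defensive.

Definition rule (A : finType) : finType := (A * {set A} * {set A})%type.
Definition H {A : finType} (r : rule A) : A := r.1.1.
Definition Bpos {A : finType} (r : rule A) : {set A} := r.1.2.
Definition Bneg {A : finType} (r : rule A) : {set A} := r.2.

(* A program over the atom set A (all of A = Gamma_P) is a finite set of rules;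
   nonemptiness is imposed in the theorem. *)
Definition program (A : finType) := {set rule A}.

Definition positive {A : finType} (P : program A) : Prop :=
  forall r, r \in P -> Bneg r = set0.

Definition tight {A : finType} (P : program A) : Prop :=
  exists l : A -> nat, forall r, r \in P -> forall b, b \in Bpos r -> l b < l (H r).

Definition Psi {A : finType} (P : program A) (I J : {set A}) : {set A} :=
  [set H r | r in [set r in P | (Bpos r \subset I) && [disjoint Bneg r & J]]].

Record automaton := Automaton {
  st : finType;
  inp : finType;
  delta : st -> inp -> st }.

Definition char_aut {A : finType} (P : program A) : automaton :=
  @Automaton {set A} {set A} (Psi P).

Definition subautomaton (M : automaton) (Q' : {set st M}) (S' : {set inp M}) : Prop :=
  S' != set0 /\ forall q x, q \in Q' -> x \in S' -> delta q x \in Q'.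

Definition iso_onto (N M : automaton) (Q' : {set st M}) (S' : {set inp M}) : Prop :=
  exists (h1 : st N -> st M) (h2 : inp N -> inp M),
    [/\ injective h1, h1 @: setT = Q', injective h2, h2 @: setT = S' &
        forall q x, h1 (delta q x) = delta (h1 q) (h2 x)].

Arguments iso_onto N {M} Q' S'.

Definition in_IS (N M : automaton) : Prop :=
  exists (Q' : {set st M}) (S' : {set inp M}), subautomaton Q' S' /\ iso_onto N Q' S'.

(* R over the single atom tt : the rule  tt <- not tt *)
Definition reset_prog : program unit := [set ((tt, set0, [set tt]) : rule unit)].

Definition feedforward {A : finType} (k : nat) (T : finType)
  (psi : 'I_k -> {ffun 'I_k -> {set A}} -> T -> {set A}) : Prop :=
  forall (i : 'I_k) (s s' : {ffun 'I_k -> {set A}}) (x : T),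
    (forall j : 'I_k, j < i -> s j = s' j) -> psi i s x = psi i s' x.

(* characteristic automaton of P |x ... |x P [T, psi]  (k factors, all equal to P) *)
Definition cascade_aut {A : finType} (P : program A) (k : nat) (T : finType)
  (psi : 'I_k -> {ffun 'I_k -> {set A}} -> T -> {set A}) : automaton :=
  @Automaton {ffun 'I_k -> {set A}} T
    (fun s x => [ffun i => Psi P (s i) (psi i s x)]).

(* Main.v *)
Require Import Defs.
From mathcomp Require Import all_boot.
From mathcomp Require Import zify.

Definition maxl {A : finType} (l : A -> nat) := \max_(a : A) l a.
Definition kk {A : finType} (l : A -> nat) := (maxl l).+1 * #|A|.

Lemma idx_lt {A : finType} (l : A -> nat) a : l a * #|A| + enum_rank a < kk l.
Proof.
have h1 := ltn_ord (enum_rank a).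
have h2 : l a <= maxl l by apply: (leq_bigmax a).
rewrite /kk; apply: (leq_trans (n := (l a * #|A| + #|A|))).
  by rewrite ltn_add2l.
by rewrite addnC -mulSn leq_mul2r ltnS h2 orbT.
Qed.

Definition idx {A : finType} (l : A -> nat) a : 'I_(kk l) := Ordinal (idx_lt l a).

Lemma idx_inj {A : finType} (l : A -> nat) : injective (idx l).
Proof.
move=> a b /(congr1 val) /= e.
have := congr1 (modn^~ #|A|) e; rewrite /= !modnMDl !modn_small ?ltn_ord // => e'.
by apply: enum_rank_inj; apply: val_inj.
Qed.

Lemma idx_mono {A : finType} {l : A -> nat} {a b} : l b < l a -> idx l b < idx l a.
Proof.
move=> h /=; have h2 := ltn_ord (enum_rank b).
apply: (leq_trans (n := (l b).+1 * #|A|)); first by rewrite mulSnr ltn_add2l.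
by apply: leq_trans (leq_addr _ _); rewrite leq_mul2r h orbT.
Qed.

Definition hh {A : finType} (l : A -> nat) (I : {set A}) : {ffun 'I_(kk l) -> {set unit}} :=
  [ffun i => [set u : unit | [exists a in I, idx l a == i]]].
Definition dec {A : finType} (l : A -> nat) (i : 'I_(kk l)) (s : {ffun 'I_(kk l) -> {set unit}}) :=
  [set b | (idx l b < i) && (tt \in s (idx l b))].
Definition psi {A : finType} (P : program A) (l : A -> nat) (i : 'I_(kk l))
  (s : {ffun 'I_(kk l) -> {set unit}}) (x : {set A}) : {set unit} :=
  [set u : unit | ~~ [exists r in P, (idx l (H r) == i) && (Bpos r \subset dec l i s)]].

Lemma Psi_reset S J : (tt \in Psi reset_prog S J) = (tt \notin J).
Proof.
rewrite /Psi /reset_prog.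
apply/imsetP/idP => [[r]|h].
  rewrite inE in_set1 => /andP[/eqP -> /andP[_ d]] _.
  by move: d; rewrite /Bneg /= disjoints1.
exists ((tt, set0, [set tt]) : rule unit) => //.
by rewrite !inE eqxx /Bpos /Bneg /= sub0set disjoints1 h.
Qed.

Lemma key {A : finType} {P : program A} {l : A -> nat} :
  positive P ->
  (forall r, r \in P -> forall b, b \in Bpos r -> l b < l (H r)) ->
  forall I x, hh l (Psi P I x) =
    [ffun i => Psi reset_prog (hh l I i) (psi P l i (hh l I) x)].
Proof.
move=> pos hl I x.
apply/ffunP => i; rewrite !ffunE; apply/setP => u; case: u.
rewrite Psi_reset !inE negbK.
apply/existsP/existsP.
  move=> [a /andP[/imsetP[r rin ->] e]].
  rewrite inE in rin; case/andP: rin => rP /andP[sub _].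
  exists r; rewrite rP e /=.
  apply/subsetP => b bin; rewrite inE.
  rewrite -(eqP e) (idx_mono (hl r rP b bin)) /=.
  rewrite ffunE inE; apply/existsP; exists b.
  by rewrite (subsetP sub b bin) eqxx.
move=> [r /andP[rP /andP[e sub]]].
exists (H r); rewrite e andbT.
apply/imsetP; exists r => //.
rewrite inE rP /= (pos r rP).
have -> : [disjoint set0 & x] by rewrite -setI_eq0 set0I.
rewrite andbT.
apply/subsetP => b bin.
have := subsetP sub b bin; rewrite !inE ffunE inE.
by move=> /andP[_ /existsP[a /andP[aI /eqP /idx_inj <-]]].
Qed.

Theorem theorem5p3 (A : finType) (P : program A) :
  0 < #|A| -> P != set0 -> positive P -> tight P ->
  exists (k : nat) (T : finType)
         (psi : 'I_k -> {ffun 'I_k -> {set unit}} -> T -> {set unit}),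
    [/\ 0 < k, 0 < #|T|, feedforward psi &
        in_IS (char_aut P) (cascade_aut reset_prog psi)].
Proof.
move=> nA nP pos [l hl].
have K := key pos hl.
exists (kk l), {set A}, (psi P l); split.
- by rewrite /kk muln_gt0 nA.
- by apply/card_gt0P; exists set0.
- move=> i s s' x h; rewrite /psi.
  have -> : dec l i s = dec l i s'.
    apply/setP => b; rewrite !inE; case: ltnP => //= lt.
    by rewrite h.
  by [].
- exists (hh l @: setT), setT; split; first split.
  + by apply/set0Pn; exists set0; rewrite inE.
  + move=> q x /imsetP[I _ ->] _ /=.
    rewrite -K; apply: imset_f; by rewrite inE.
  + exists (hh l), id; split => //.
    * move=> I J e; apply/setP => a.
      have := congr1 (fun f : {ffun 'I_(kk l) -> {set unit}} => tt \in f (idx l a)) e; rewrite /= !ffunE !inE => e'.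
      apply/idP/idP => h.
        have : [exists b in I, idx l b == idx l a] by apply/existsP; exists a; rewrite h eqxx.
        by rewrite e' => /existsP[b /andP[bJ /eqP /idx_inj <-]].
      have : [exists b in J, idx l b == idx l a] by apply/existsP; exists a; rewrite h eqxx.
      by rewrite -e' => /existsP[b /andP[bJ /eqP /idx_inj <-]].
    * by apply/setP => y; rewrite inE; apply/imsetP; exists y.
Qed.
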